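(* Let $G_1$ and $G_2$ be vertex-disjoint graphs. Then $$\frac{\sigma_1(G_1\cup G_2)}{\sigma_0(G_1\cup G_2)}=\frac{\sigma_1(G_1)}{\sigma_0(G_1)}+\frac{\sigma_1(G_2)}{\sigma_0(G_2)}.$$ Moreover, for every graph $G$ with at least one vertex, no isolated vertex, and maximum degree at most $2$, $$\frac{\sigma_1(G)}{\sigma_0(G)}\ge\frac13,$$ with equality for $G=P_2$.
   Context: All graphs are finite and simple. $\sigma_0(G)$ is the number of independent vertex sets of $G$ (including the empty set) and $\sigma_1(G)$ is the number of vertex sets $S\subseteq V(G)$ whose induced subgraph has exactly one edge. $G_1\cup G_2$ is the disjoint union (vertex set $V(G_1)\cup V(G_2)$, edge set $E(G_1)\cup E(G_2)$). $P_2$ is the path on two vertices (a single edge). *)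

(* Defs.v *)
From mathcomp Require Import all_boot all_order all_algebra.
Set Implicit Arguments. Unset Strict Implicit. Unset Printing Implicit Defensive.

Section Graphs.
Variable T : finType.

Definition simple_graph (e : rel T) : Prop := symmetric e /\ irreflexive e.

Definition independent (e : rel T) (S : {set T}) : bool :=
  [forall x in S, forall y in S, ~~ e x y].

(* number of edges of the induced subgraph G[S] (edges as 2-element vertex sets) *)
Definition edges_in (e : rel T) (S : {set T}) : nat :=
  #|[set A : {set T} | (A \subset S) &&
      [exists x, exists y, (A == [set x; y]) && e x y]]|.

Definition sigma0 (e : rel T) : nat := #|[set S : {set T} | independent e S]|.
Definition sigma1 (e : rel T) : nat := #|[set S : {set T} | edges_in e S == 1%N]|.

Definition degree (e : rel T) (x : T) : nat := #|[set y | e x y]|.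

End Graphs.

Definition dunion (T1 T2 : finType) (e1 : rel T1) (e2 : rel T2) : rel (T1 + T2)%type :=
  fun u v => match u, v with
             | inl a, inl b => e1 a b
             | inr a, inr b => e2 a b
             | _, _ => false
             end.

Definition P2 : rel 'I_2 := fun x y => x != y.

Definition sigma_ratio (T : finType) (e : rel T) : rat :=
  ((sigma1 e)%:R / (sigma0 e)%:R)%R.

Arguments simple_graph {T}.
Arguments independent {T}.
Arguments edges_in {T}.
Arguments sigma0 {T}.
Arguments sigma1 {T}.
Arguments degree {T}.
Arguments dunion {T1 T2}.
Arguments sigma_ratio {T}.

(* Main.v *)
Require Import Defs.
From mathcomp Require Import all_boot all_order all_algebra.
From mathcomp Require Import zify ring lra.
Import Order.TTheory GRing.Theory Num.Theory.
Set Implicit Arguments. Unset Strict Implicit. Unset Printing Implicit Defensive.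

Section G.
Variable T : finType.
Variable e : rel T.
Hypothesis esy : symmetric e.
Hypothesis eirr : irreflexive e.

Definition ES (S : {set T}) := [set A : {set T} | (A \subset S) &&
      [exists x, exists y, (A == [set x; y]) && e x y]].

Lemma edges_inE S : edges_in e S = #|ES S|. Proof. by []. Qed.

Lemma indepP (S : {set T}) : reflect (forall x y, x \in S -> y \in S -> ~~ e x y) (independent e S).
Proof.
apply: (iffP forall_inP) => [H x y xS yS | H x xS].
  by move: (H x xS) => /forall_inP; apply.
by apply/forall_inP => y yS; apply: H.
Qed.

Lemma indep_sub (A B : {set T}) : A \subset B -> independent e B -> independent e A.
Proof.
move=> AB /indepP H; apply/indepP => x y xA yA; apply: H; exact: (subsetP AB).
Qed.

Lemma ESP (S A : {set T}) : reflect (A \subset S /\ exists x y, A = [set x; y] /\ e x y) (A \in ES S).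
Proof.
apply: (iffP idP).
  rewrite inE => /andP [AS /existsP [x /existsP [y /andP [/eqP Axy exy]]]].
  by split=> //; exists x, y.
move=> [AS [x [y [Axy exy]]]]; rewrite inE AS /=.
by apply/existsP; exists x; apply/existsP; exists y; rewrite Axy eqxx.
Qed.

Lemma edges0 (S : {set T}) : (edges_in e S == 0) = independent e S.
Proof.
rewrite edges_inE cards_eq0; apply/eqP/indepP => [H0 x y xS yS|H].
  apply/negP => exy.
  have : [set x; y] \in ES S.
    apply/ESP; split; last by exists x, y.
    by apply/subsetP => z; rewrite !inE => /orP [] /eqP ->.
  by rewrite H0 inE.
apply/eqP; rewrite -subset0; apply/subsetP => A /ESP [AS [x [y [Axy exy]]]].
have xS : x \in S by apply: (subsetP AS); rewrite Axy !inE eqxx.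
have yS : y \in S by apply: (subsetP AS); rewrite Axy !inE eqxx orbT.
by move: (H x y xS yS); rewrite exy.
Qed.

Lemma edge_set1 (S : {set T}) x y u v : edges_in e S = 1 ->
  x \in S -> y \in S -> e x y -> u \in S -> v \in S -> e u v ->
  [set x; y] = [set u; v].
Proof.
rewrite edges_inE => /eqP /cards1P [A0 HA] xS yS exy uS vS euv.
have sub2 a b : a \in S -> b \in S -> [set a; b] \subset S.
  by move=> aS bS; apply/subsetP => z; rewrite !inE => /orP [] /eqP ->.
have h1 : [set x; y] \in ES S by apply/ESP; split; [exact: sub2 | exists x, y].
have h2 : [set u; v] \in ES S by apply/ESP; split; [exact: sub2 | exists u, v].
by move: h1 h2; rewrite HA !inE => /eqP -> /eqP ->.
Qed.


Definition Ind := [set S : {set T} | independent e S].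
Definition Sig := [set S : {set T} | edges_in e S == 1].
Definition W x y := [set z | e x z || e y z].
Definition F x y := [set J in Ind | J :&: W x y == set0].
Definition Gs x y := [set S in Sig | (x \in S) && (y \in S)].
Definition KS x y := [set K in Ind | K \subset W x y].
Definition Pn x y := x |: [set z | e x z && (z != y)].
Definition SP x y := [set K in Ind | K \subset Pn x y].

Lemma pair_eq (u v x y : T) : (u == x) || (u == y) -> (v == x) || (v == y) -> u != v ->
  [set u; v] = [set x; y].
Proof.
move=> hu hv uv.
case/orP: hu uv => /eqP ->; case/orP: hv => /eqP -> //; rewrite ?eqxx // => _.
exact: setUC.
Qed.

Lemma sub2 (S : {set T}) a b : a \in S -> b \in S -> [set a; b] \subset S.
Proof. by move=> aS bS; apply/subsetP => z; rewrite !inE => /orP [] /eqP ->. Qed.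

Lemma L1 x y : e x y -> #|F x y| <= #|Gs x y|.
Proof.
move=> exy.
have xW : x \in W x y by rewrite !inE [e y x]esy exy orbT.
have yW : y \in W x y by rewrite !inE exy.
pose f := fun J : {set T} => J :|: [set x; y].
have nJ (J : {set T}) : J :&: W x y == set0 -> forall z, z \in J -> (z != x) && (z != y).
  move=> /eqP HJ z zJ; apply/andP; split; apply/eqP => zE.
    have : z \in J :&: W x y by rewrite inE zJ zE xW.
    by rewrite HJ inE.
  have : z \in J :&: W x y by rewrite inE zJ zE yW.
  by rewrite HJ inE.
have inj : {in F x y &, injective f}.
  move=> J1 J2; rewrite !inE => /andP [_ H1] /andP [_ H2] Hf.
  apply/setP => z; have := congr1 (fun S : {set T} => z \in S) Hf; rewrite /f !inE.
  case: (boolP (z \in J1)) => z1; case: (boolP (z \in J2)) => z2 //=.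
    by move: (nJ _ H1 _ z1) => /andP [/negbTE -> /negbTE ->].
  by move: (nJ _ H2 _ z2) => /andP [/negbTE -> /negbTE ->].
rewrite -(card_in_imset inj); apply: subset_leq_card; apply/subsetP => S /imsetP [J JF ->].
move: JF; rewrite !inE => /andP [JI HJ].
have key u v : u \in f J -> v \in f J -> e u v -> (u == x) || (u == y).
  rewrite /f /= !inE => /orP [uJ|/orP [uE|uE]]; [|by rewrite uE|by rewrite uE orbT].
  move: (HJ) => /eqP /setP /(_ u); rewrite !inE uJ /= => /negbT.
  rewrite negb_or => /andP [/negbTE nxu /negbTE nyu].
  move=> /orP [vJ|/orP [/eqP ->|/eqP ->]] euv.
  - by move/indepP: JI => /(_ u v uJ vJ); rewrite euv.
  - by move: euv; rewrite esy nxu.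
  - by move: euv; rewrite esy nyu.
apply/andP; split; last by rewrite !eqxx !orbT.
rewrite edges_inE; apply/cards1P; exists [set x; y]; apply/setP => C; rewrite [RHS]inE.
apply/idP/idP.
  move=> /ESP [CS [u [v [Cuv euv]]]]; rewrite Cuv.
  have uS : u \in f J by apply: (subsetP CS); rewrite Cuv; apply: set21.
  have vS : v \in f J by apply: (subsetP CS); rewrite Cuv; apply: set22.
  apply/eqP; apply: pair_eq.
  - exact: (key u v).
  - by apply: (key v u) => //; rewrite esy.
  - by apply/eqP => uv; move: euv; rewrite uv eirr.
move/eqP => ->; apply/ESP; split; last by exists x, y.
by apply: sub2; rewrite /f !inE eqxx ?orbT.
Qed.

Lemma L2 x y : #|Ind| <= #|KS x y| * #|F x y|.
Proof.
pose g := fun I : {set T} => (I :&: W x y, I :\: W x y).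
have inj : {in Ind &, injective g}.
  move=> I1 I2 _ _ [H1 H2].
  by rewrite -(setID I1 (W x y)) -(setID I2 (W x y)) H1 H2.
rewrite -cardsX -(card_in_imset inj); apply: subset_leq_card.
apply/subsetP => p /imsetP [I]; rewrite inE => II ->.
rewrite in_setX /= !inE subsetIr andbT.
rewrite (indep_sub (subsetIl _ _) II) (indep_sub (subsetDl _ _) II) /=.
by apply/eqP/setP => z; rewrite !inE; case: (_ || _); rewrite ?andbF.
Qed.


Lemma card3 (U : finType) (a b c : U) : #|[set a; b; c]| <= 3.
Proof.
apply: leq_trans (leq_card_setU _ _) _.
by rewrite cards1 cards2 addn1 ltnS; case: (a != b).
Qed.

Lemma indep1 z : independent e [set z].
Proof. by apply/indepP => a b; rewrite !inE => /eqP -> /eqP ->; rewrite eirr. Qed.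

Lemma deg_pos x y : e x y -> 0 < degree e x.
Proof. by move=> exy; apply/card_gt0P; exists y; rewrite inE. Qed.

Lemma SPcard x y : e x y -> degree e x <= 2 -> #|SP x y| <= degree e x + 1.
Proof.
move=> exy dx.
set A := [set z | e x z && (z != y)].
have degA : degree e x = (#|A|).+1.
  rewrite /degree (cardsD1 y) inE exy; congr (_.+1); apply: eq_card => z.
  by rewrite !inE andbC.
have A1 : #|A| <= 1 by rewrite -ltnS -degA.
have sub : SP x y \subset [set set0; [set x]; A].
  apply/subsetP => K; rewrite !inE => /andP [KI KP].
  case: (boolP (x \in K)) => xK.
    suff -> : K = [set x] by rewrite eqxx ?orbT.
    apply/eqP; rewrite eqEsubset sub1set xK andbT; apply/subsetP => z zK; rewrite inE.
    apply/negPn/negP => zx.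
    have : z \in Pn x y by apply: (subsetP KP).
    rewrite !inE (negbTE zx) /= => /andP [exz _].
    by move/indepP: KI => /(_ x z xK zK); rewrite exz.
  have KA : K \subset A.
    apply/subsetP => z zK; have : z \in Pn x y by apply: (subsetP KP).
    rewrite !inE => /orP [/eqP zx|//]; by move: xK; rewrite -zx zK.
  case: (boolP (K == set0)) => [/eqP ->|Kn0] //.
  suff -> : K = A by rewrite eqxx ?orbT.
  apply/eqP; rewrite eqEcard KA /=; apply: leq_trans A1 _; by rewrite card_gt0.
apply: leq_trans (subset_leq_card sub) _.
rewrite degA; move: A1; rewrite leq_eqVlt ltnS leqn0 => /orP [/eqP ->|/eqP A0].
  exact: card3.
have -> : A = set0 by apply: cards0_eq.
have -> : [set set0; [set x]; set0] = [set set0; [set x]] :> {set {set T}}.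
  by apply/setP => K; rewrite !inE; case: (K == set0); rewrite ?orbT ?orbF.
by rewrite cards0 cards2; case: (_ != _).
Qed.

Lemma KScard x y : e x y -> degree e x <= 2 -> degree e y <= 2 ->
  #|KS x y| <= (degree e x + 1) * (degree e y + 1) - 1.
Proof.
move=> exy dx dy.
have eyx : e y x by rewrite esy.
have WPQ : W x y \subset Pn x y :|: Pn y x.
  apply/subsetP => z; rewrite !inE => /orP [exz|eyz].
    by case: (boolP (z == y)) => _; rewrite exz /= ?orbT.
  by case: (boolP (z == x)) => _; rewrite eyz /= ?orbT.
pose h := fun K : {set T} => (K :&: Pn x y, K :&: Pn y x).
have inj : {in KS x y &, injective h}.
  move=> K1 K2; rewrite !inE => /andP [_ K1W] /andP [_ K2W] [H1 H2].
  have E (K : {set T}) : K \subset W x y -> K = (K :&: Pn x y) :|: (K :&: Pn y x).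
    move=> KW; rewrite -setIUr; apply/esym/setIidPl; exact: subset_trans KW WPQ.
  by rewrite (E _ K1W) (E _ K2W) H1 H2.
have px : [set x] \in SP x y by rewrite inE sub1set !inE eqxx indep1.
have py : [set y] \in SP y x by rewrite inE sub1set !inE eqxx indep1.
have pin : ([set x], [set y]) \in setX (SP x y) (SP y x) by rewrite in_setX px py.
apply: (@leq_trans #|setX (SP x y) (SP y x) :\ ([set x], [set y])|).
  rewrite -(card_in_imset inj); apply: subset_leq_card.
  apply/subsetP => p /imsetP [K]; rewrite !inE => /andP [KI KW] ->.
  rewrite /h /= !subsetIr !andbT !(indep_sub (subsetIl _ _) KI) ?andbT.
  apply/negP => /eqP [Hx Hy].
  have : x \in K :&: Pn x y by rewrite Hx set11.
  have : y \in K :&: Pn y x by rewrite Hy set11.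
  rewrite !inE => /andP [yK _] /andP [xK _].
  by move/indepP: KI => /(_ x y xK yK); rewrite exy.
have := cardsD1 ([set x], [set y]) (setX (SP x y) (SP y x)).
rewrite pin cardsX add1n => Hc.
have := leq_mul (SPcard exy dx) (SPcard eyx dy); rewrite Hc => H.
by have := leq_sub2r 1 H; rewrite subn1.
Qed.

Lemma degE x : degree e x = \sum_v (e x v : nat).
Proof.
rewrite /degree -sum1_card big_mkcond /=; apply: eq_bigr => v _.
by rewrite inE; case: (e x v).
Qed.

Lemma deg2 v x y : x != y -> (e v x : nat) + e v y <= degree e v.
Proof.
move=> xy; case evx: (e v x); case evy: (e v y) => //=.
- have : [set x; y] \subset [set z | e v z].
    by apply/subsetP => z; rewrite !inE => /orP [] /eqP ->; rewrite ?evx ?evy.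
  by move/subset_leq_card; rewrite cards2 xy.
- exact: deg_pos evx.
- exact: deg_pos evy.
Qed.

Lemma Dbound x y : e x y -> 2 * (degree e x + degree e y) <= \sum_v degree e v + 2.
Proof.
move=> exy.
have xy : x != y by apply/eqP => xy; move: exy; rewrite xy eirr.
have dx := deg_pos exy.
have dy : 0 < degree e y by apply: (@deg_pos y x); rewrite esy.
have pw v : (e v x : nat) + e v y + (v == x) * (degree e x - 1) + (v == y) * (degree e y - 1)
    <= degree e v.
  case: (eqVneq v x) => [->|vx].
    rewrite eirr exy (negbTE xy) /=; lia.
  case: (eqVneq v y) => [->|vy].
    rewrite eirr [e y x]esy exy /=; lia.
  rewrite !mul0n !addn0; exact: deg2.
have := leq_sum (index_enum T) (fun v (_ : true) => pw v).
rewrite !big_split /=.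
have s1 z : \sum_v (e v z : nat) = degree e z.
  by rewrite degE; apply: eq_bigr => v _; rewrite esy.
have s2 z c : \sum_v ((v == z) * c) = c.
  by rewrite (bigD1 z) //= eqxx mul1n big1 ?addn0 // => v /negbTE ->.
rewrite !s1 !s2; lia.
Qed.

Lemma kron2 (a b : T) : \sum_x \sum_y ((x == a) * (y == b)) = 1.
Proof.
rewrite (bigD1 a) //= [X in _ + X]big1; last first.
  by move=> x /negbTE xa; rewrite big1 // => y _; rewrite xa.
rewrite addn0 (bigD1 b) //= [X in _ + X]big1; last first.
  by move=> y /negbTE yb; rewrite yb muln0.
by rewrite !eqxx.
Qed.

Lemma sumG : \sum_x \sum_(y | e x y) #|Gs x y| <= 2 * #|Sig|.
Proof.
have cardG x y : #|Gs x y| = \sum_(S in Sig) ((x \in S) && (y \in S) : nat).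
  rewrite -sum1_card big_mkcond [RHS]big_mkcond /=; apply: eq_bigr => S _.
  by rewrite !inE; case: (_ == 1); case: (x \in S); case: (y \in S).
have step x : \sum_(y | e x y) #|Gs x y| =
    \sum_(S in Sig) \sum_y (e x y && (x \in S) && (y \in S) : nat).
  rewrite big_mkcond /= (eq_bigr (fun y => \sum_(S in Sig) (e x y && (x \in S) && (y \in S) : nat))).
    by rewrite exchange_big.
  move=> y _; case: (e x y) => /=; first exact: cardG.
  by rewrite big1.
rewrite (eq_bigr _ (fun x _ => step x)) exchange_big mulnC -sum_nat_const.
apply: leq_sum => S; rewrite inE => /eqP S1.
have : edges_in e S == 1 by rewrite S1.
rewrite edges_inE => /cards1P [A0 HA].
have : A0 \in ES S by rewrite HA set11.
move=> /ESP [A0S [x0 [y0 [A0E e0]]]].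
have x0S : x0 \in S by apply: (subsetP A0S); rewrite A0E set21.
have y0S : y0 \in S by apply: (subsetP A0S); rewrite A0E set22.
apply: (@leq_trans (\sum_x \sum_y ((x == x0) * (y == y0) + (x == y0) * (y == x0)))).
  apply: leq_sum => x _; apply: leq_sum => y _.
  case H: (e x y && (x \in S) && (y \in S)) => //.
  move/andP: H => [/andP [exy xS] yS].
  have E := edge_set1 S1 xS yS exy x0S y0S e0.
  have hx : (x == x0) || (x == y0) by rewrite -!in_set2 -E set21.
  have hy : (y == x0) || (y == y0) by rewrite -!in_set2 -E set22.
  have nxy : x != y by apply/eqP => xy; move: exy; rewrite xy eirr.
  case/orP: hx nxy => /eqP ->; case/orP: hy => /eqP -> //; rewrite ?eqxx //= => _.
    by rewrite muln1 addn1.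
rewrite (eq_bigr (fun x => \sum_y ((x == x0) * (y == y0)) + \sum_y ((x == y0) * (y == x0)))).
  by rewrite big_split /= !kron2.
by move=> x _; rewrite big_split.
Qed.

Lemma part2 : 0 < #|T| -> (forall x, 0 < degree e x) -> (forall x, degree e x <= 2) ->
  #|Ind| <= 3 * #|Sig|.
Proof.
move=> HT dpos d2.
set D := \sum_v degree e v.
have Dpos : 0 < D.
  move/card_gt0P: HT => [x0 _].
  by rewrite /D (bigD1 x0) //=; apply: leq_trans (dpos x0) (leq_addr _ _).
have each x y : e x y -> 2 * #|Ind| <= 3 * D * #|Gs x y|.
  move=> exy.
  have hD := Dbound exy; have hK := KScard exy (d2 x) (d2 y).
  have hx := d2 x; have hy := d2 y; have px := dpos x; have py := dpos y.
  have hk : 2 * #|KS x y| <= 3 * D.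
    have : degree e x = 1 \/ degree e x = 2 by lia.
    have : degree e y = 1 \/ degree e y = 2 by lia.
    move=> [Ey|Ey] [Ex|Ex]; rewrite Ex Ey in hD hK; rewrite -/D in hD; lia.
  apply: (@leq_trans (2 * (#|KS x y| * #|Gs x y|))).
    rewrite leq_pmul2l //; apply: leq_trans (L2 x y) _.
    by rewrite leq_mul2l L1 ?orbT.
  by rewrite mulnA leq_mul2r hk orbT.
have H1 : \sum_x \sum_(y | e x y) (2 * #|Ind|) = D * (2 * #|Ind|).
  rewrite /D big_distrl /=; apply: eq_bigr => x _.
  rewrite (eq_bigl (fun y => y \in [set y | e x y])) ?sum_nat_const //.
  by move=> y; rewrite inE.
have H2 c : \sum_x \sum_(y | e x y) (c * #|Gs x y|) =
    c * \sum_x \sum_(y | e x y) #|Gs x y|.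
  by rewrite big_distrr; apply: eq_bigr => x _; rewrite big_distrr.
have := leq_sum (index_enum T) (fun x (_ : true) => leq_sum (index_enum T) (fun y exy => each x y exy)).
rewrite H1 H2 => H.
have := leq_trans H (leq_mul (leqnn (3 * D)) sumG).
move=> H3; nia.
Qed.

End G.

Section U.
Variables T1 T2 : finType.
Variables (e1 : rel T1) (e2 : rel T2).

Local Notation U := (T1 + T2)%type.
Local Notation e := (dunion e1 e2).

Definition join (p : {set T1} * {set T2}) : {set U} := inl @: p.1 :|: inr @: p.2.

Lemma memL z A B : (inl z \in join (A, B)) = (z \in A).
Proof.
rewrite /join inE mem_imset /=; last by move=> ? ? [].
case: (z \in A) => //=; apply/imsetP => [[w _ H]]; discriminate.
Qed.

Lemma memR z A B : (inr z \in join (A, B)) = (z \in B).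
Proof.
rewrite /join inE [X in _ || X]mem_imset /=; last by move=> ? ? [].
case: (z \in B); rewrite ?orbT //= orbF; apply/imsetP => [[w _ H]]; discriminate.
Qed.

Lemma join_inj : injective join.
Proof.
move=> [A1 B1] [A2 B2] H; congr pair; apply/setP => z.
  by rewrite -(memL z A1 B1) -(memL z A2 B2) H.
by rewrite -(memR z A1 B1) -(memR z A2 B2) H.
Qed.

Lemma join_surj (S : {set U}) : S = join (inl @^-1: S, inr @^-1: S).
Proof. by apply/setP => [[z|z]]; rewrite ?memL ?memR inE. Qed.

Lemma indep_join A B : independent e (join (A, B)) = independent e1 A && independent e2 B.
Proof.
apply/indepP/andP.
  move=> H; split; apply/indepP => x y xA yA.
    by have := H (inl x) (inl y); rewrite !memL; apply.
  by have := H (inr x) (inr y); rewrite !memR; apply.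
move=> [/indepP H1 /indepP H2] [x|x] [y|y]; rewrite ?memL ?memR //=.
  exact: H1.
exact: H2.
Qed.

Lemma ES_join A B : ES e (join (A, B)) =
  (fun C : {set T1} => inl @: C) @: ES e1 A :|: (fun C : {set T2} => inr @: C) @: ES e2 B.
Proof.
apply/setP => C; apply/idP/idP.
  move=> /ESP [CS [u [v [Cuv euv]]]].
  have uS : u \in join (A, B) by apply: (subsetP CS); rewrite Cuv set21.
  have vS : v \in join (A, B) by apply: (subsetP CS); rewrite Cuv set22.
  rewrite in_setU; move: uS vS euv; case: u Cuv => a Cuv; case: v Cuv => b Cuv //=;
    rewrite ?memL ?memR => aA bA eab.
    apply/orP; left; apply/imsetP; exists [set a; b].
      apply/ESP; split; [exact: sub2 | by exists a, b].
    by rewrite Cuv imsetU1 imset_set1.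
  apply/orP; right; apply/imsetP; exists [set a; b].
    apply/ESP; split; [exact: sub2 | by exists a, b].
  by rewrite Cuv imsetU1 imset_set1.
rewrite in_setU => /orP [] /imsetP [C1 /ESP [C1S [a [b [C1ab eab]]]] ->];
  apply/ESP; split.
- by apply/subsetP => z /imsetP [w wC1 ->]; rewrite memL (subsetP C1S).
- by exists (inl a), (inl b); rewrite C1ab imsetU1 imset_set1.
- by apply/subsetP => z /imsetP [w wC1 ->]; rewrite memR (subsetP C1S).
- by exists (inr a), (inr b); rewrite C1ab imsetU1 imset_set1.
Qed.

Lemma edges_join A B : edges_in e (join (A, B)) = edges_in e1 A + edges_in e2 B.
Proof.
have iL : injective (fun C : {set T1} => (inl @: C : {set U})).
  by apply: imset_inj => ? ? [].
have iR : injective (fun C : {set T2} => (inr @: C : {set U})).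
  by apply: imset_inj => ? ? [].
rewrite !edges_inE ES_join cardsU (card_imset _ iL) (card_imset _ iR).
suff -> : (fun C : {set T1} => inl @: C) @: ES e1 A :&: (fun C : {set T2} => inr @: C) @: ES e2 B = set0.
  by rewrite cards0 subn0.
apply/setP => C; rewrite !inE; apply/negP => /andP [/imsetP [C1 /ESP [_ [a [b [C1ab _]]]] ->]].
move=> /imsetP [C2 _ H].
have : (inl a : U) \in inl @: C1 by apply: imset_f; rewrite C1ab set21.
by rewrite H => /imsetP [w _].
Qed.

End U.

Lemma add_eq1 (a b : nat) : (a + b == 1) = ((a == 1) && (b == 0)) || ((a == 0) && (b == 1)).
Proof. by case: a => [|[|a]]; case: b => [|[|b]]; rewrite ?addnS ?addSn. Qed.

Lemma sigma0_gt0 (T : finType) (e : rel T) : 0 < sigma0 e.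
Proof.
apply/card_gt0P; exists set0; rewrite inE; apply/indepP => x y; by rewrite inE.
Qed.

Section U2.
Variables T1 T2 : finType.
Variables (e1 : rel T1) (e2 : rel T2).

Lemma sigma0_join : sigma0 (dunion e1 e2) = sigma0 e1 * sigma0 e2.
Proof.
rewrite /sigma0.
have -> : [set S : {set (T1 + T2)%type} | independent (dunion e1 e2) S] =
    (@join T1 T2) @: setX [set A | independent e1 A] [set B | independent e2 B].
  apply/setP => S; rewrite inE; apply/idP/imsetP.
    move=> HS; exists (inl @^-1: S, inr @^-1: S); last exact: join_surj.
    by rewrite in_setX !inE -indep_join -join_surj.
  by move=> [[A B]]; rewrite in_setX !inE /= => HAB ->; rewrite indep_join.
by rewrite card_imset ?cardsX //; exact: join_inj.
Qed.

Lemma sigma1_join : sigma1 (dunion e1 e2) = sigma1 e1 * sigma0 e2 + sigma0 e1 * sigma1 e2.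
Proof.
rewrite /sigma1 /sigma0.
have -> : [set S : {set (T1 + T2)%type} | edges_in (dunion e1 e2) S == 1] =
    (@join T1 T2) @: (setX [set A | edges_in e1 A == 1] [set B | independent e2 B] :|:
             setX [set A | independent e1 A] [set B | edges_in e2 B == 1]).
  apply/setP => S; rewrite inE; apply/idP/imsetP.
    move=> HS; exists (inl @^-1: S, inr @^-1: S); last exact: join_surj.
    by rewrite in_setU !in_setX !inE /= -!edges0 -add_eq1 -edges_join -join_surj.
  move=> [[A B]]; rewrite in_setU !in_setX !inE /= => HAB ->.
  by rewrite edges_join add_eq1 !edges0.
rewrite card_imset; last exact: join_inj.
rewrite cardsU !cardsX.
suff -> : setX [set A | edges_in e1 A == 1] [set B | independent e2 B] :&:
          setX [set A | independent e1 A] [set B | edges_in e2 B == 1] = set0.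
  by rewrite cards0 subn0.
apply/setP => [[A B]]; rewrite !inE /=.
rewrite -(edges0 e1 A); case: (edges_in e1 A) => [|[|n]] //=; by rewrite andbF.
Qed.

End U2.

Lemma two3 (u v z : 'I_2) : u != v -> (z == u) || (z == v).
Proof. by case: u => [[|[|u]] Hu] //; case: v => [[|[|v]] Hv] //; case: z => [[|[|z]] Hz]. Qed.

Lemma P2_indep (S : {set 'I_2}) : independent P2 S = (S != setT).
Proof.
apply/indepP/idP.
  move=> H; apply/negP => /eqP ST.
  by have := H ord0 ord_max; rewrite ST !inE /P2 => /(_ isT isT).
move=> Sn x y xS yS; rewrite /P2 negbK.
have [z zS] : exists z, z \notin S.
  apply/existsP; move: Sn; apply: contraR; rewrite negb_exists => /forallP H.
  by apply/eqP/setP => w; rewrite inE; move: (H w); rewrite negbK.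
have xz : x != z by apply: contraNneq zS => <-.
have yz : y != z by apply: contraNneq zS => <-.
by move: (two3 y xz); rewrite (negbTE yz) orbF eq_sym.
Qed.

Lemma sigma0_P2 : sigma0 P2 = 3.
Proof.
rewrite /sigma0.
have -> : [set S : {set 'I_2} | independent P2 S] = ~: [set setT].
  by apply/setP => S; rewrite !inE P2_indep.
rewrite cardsC1.
have -> : #|{set 'I_2}| = #|powerset [set: 'I_2]|.
  by apply: eq_card => S; rewrite !inE subsetT.
by rewrite card_powerset cardsT card_ord.
Qed.

Lemma sigma1_P2 : sigma1 P2 = 1.
Proof.
rewrite /sigma1.
apply/eqP/cards1P; exists setT; apply/setP => S; rewrite !inE.
case: (eqVneq S setT) => [->|Sn].
  rewrite edges_inE; apply/cards1P; exists setT; apply/setP => C; rewrite [RHS]inE.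
  apply/idP/idP.
    move=> /ESP [_ [u [v [-> uv]]]]; apply/eqP/setP => z; rewrite !inE.
    exact: two3.
  move/eqP => ->; apply/ESP; split => //; exists ord0, ord_max; split => //.
  by apply/setP => z; rewrite !inE; apply/esym; apply: two3.
have := edges0 P2 S; rewrite P2_indep Sn => /eqP -> //.
Qed.

Local Open Scope ring_scope.

Theorem mainTheorem15 :
  (forall (T1 T2 : finType) (e1 : rel T1) (e2 : rel T2),
      simple_graph e1 -> simple_graph e2 ->
      sigma_ratio (dunion e1 e2) = sigma_ratio e1 + sigma_ratio e2) /\
  (forall (T : finType) (e : rel T),
      simple_graph e -> (0 < #|T|)%N ->
      (forall x, (0 < degree e x)%N) ->
      (forall x, (degree e x <= 2)%N) ->
      1 / 3 <= sigma_ratio e) /\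
  sigma_ratio P2 = 1 / 3.
Proof.
split.
  move=> T1 T2 e1 e2 _ _.
  rewrite /sigma_ratio sigma0_join sigma1_join natrD !natrM.
  have h1 : (sigma0 e1)%:R != 0 :> rat by rewrite pnatr_eq0 -lt0n sigma0_gt0.
  have h2 : (sigma0 e2)%:R != 0 :> rat by rewrite pnatr_eq0 -lt0n sigma0_gt0.
  by field; apply/andP; split.
split.
  move=> T e [esy eirr] HT dpos d2.
  have H := part2 esy eirr HT dpos d2.
  have H' : (sigma0 e)%:R <= 3 * (sigma1 e)%:R :> rat.
    by rewrite -natrM ler_nat.
  have hb : 0 < (sigma0 e)%:R :> rat by rewrite ltr0n sigma0_gt0.
  rewrite /sigma_ratio ler_pdivlMr //; lra.
by rewrite /sigma_ratio sigma0_P2 sigma1_P2.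
Qed.
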